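(* Let $\mathcal{P}$ be a partition of $\{1,\dots,n\}$ and $\mathcal{U}$ a subspace of $\mathbb{R}^n$. If $\mathcal{U}$ is $\mathcal{P}$-realizable then every element of $\mathcal{U}$ is $\mathcal{P}$-balanced. If $\mathcal{U}=\operatorname{span}\{u\}$ is one-dimensional, then $\mathcal{U}$ is $\mathcal{P}$-realizable if and only if $u$ is $\mathcal{P}$-balanced.
   Context: For $u\in\mathbb{R}^n$ and $\mathcal{I}\subseteq\{1,\dots,n\}$, $u_{\mathcal{I}}$ is the subvector of $u$ indexed by $\mathcal{I}$. $u$ is $\mathcal{P}$-balanced if $\|u_{\mathcal{I}}\|_2\le\sum_{\mathcal{J}\in\mathcal{P}\setminus\{\mathcal{I}\}}\|u_{\mathcal{J}}\|_2$ for all $\mathcal{I}\in\mathcal{P}$. $\mathcal{E}_{\mathcal{P}}=\{Y\succeq0: Y_{\mathcal{I}}=I\text{ for all }\mathcal{I}\in\mathcal{P}\}$; $\mathcal{U}$ is $\mathcal{P}$-realizable if some $Y\in\mathcal{E}_{\mathcal{P}}$ has nullspace containing $\mathcal{U}$. *)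

(* Defs.v *)
From HB Require Import structures.
From mathcomp Require Import all_boot all_order all_algebra.
From mathcomp Require Import reals.
Set Implicit Arguments. Unset Strict Implicit. Unset Printing Implicit Defensive.
Import Order.TTheory GRing.Theory Num.Theory.
Local Open Scope ring_scope.

Definition subnorm (R : realType) (n : nat) (u : 'rV[R]_n) (I : {set 'I_n}) : R :=
  Num.sqrt (\sum_(i in I) u 0 i ^+ 2).

Definition balanced (R : realType) (n : nat) (P : {set {set 'I_n}}) (u : 'rV[R]_n) : Prop :=
  forall I, I \in P -> subnorm u I <= \sum_(J in P | J != I) subnorm u J.

Definition psd (R : realType) (n : nat) (Y : 'M[R]_n) : Prop :=
  Y^T = Y /\ forall x : 'cV[R]_n, 0 <= (x^T *m Y *m x) 0 0.

Definition in_EP (R : realType) (n : nat) (P : {set {set 'I_n}}) (Y : 'M[R]_n) : Prop :=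
  psd Y /\ forall I, I \in P -> forall i j, i \in I -> j \in I -> Y i j = (i == j)%:R.

(* The subspace U (= row space of the matrix U) is P-realizable:
   some Y in E_P has nullspace containing U. *)
Definition realizable (R : realType) (n m : nat) (P : {set {set 'I_n}}) (U : 'M[R]_(m, n)) : Prop :=
  exists Y : 'M[R]_n, in_EP P Y /\ forall u : 'rV[R]_n, (u <= U)%MS -> Y *m u^T = 0.

(* Main.v *)
Require Import Defs.
From HB Require Import structures.
From mathcomp Require Import all_boot all_order all_algebra.
From mathcomp Require Import reals.
From mathcomp Require Import ring lra zify.
Import Order.TTheory GRing.Theory Num.Theory.
Local Open Scope ring_scope.
Set Implicit Arguments. Unset Strict Implicit.

Lemma sum_blocks (R : realType) n (P : {set {set 'I_n}}) (F : 'I_n -> R) :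
  partition P [set: 'I_n] -> \sum_i F i = \sum_(K in P) \sum_(i in K) F i.
Proof.
case/and3P => /eqP cov ti _; rewrite -big_trivIset // cov.
by apply: eq_bigl => i; rewrite inE.
Qed.

Lemma psd_form (R : realType) n (Y : 'M[R]_n) (f : 'I_n -> R) :
  psd Y -> 0 <= \sum_i \sum_j f i * Y i j * f j.
Proof.
case=> _ /(_ (\col_i f i)); rewrite !mxE.
under eq_bigr do rewrite !mxE.
under eq_bigr do under eq_bigr do rewrite !mxE.
rewrite exchange_big /=.
by under eq_bigr do rewrite mulr_suml.
Qed.

Lemma diag_block (R : realType) n (P : {set {set 'I_n}}) (Y : 'M[R]_n)
   (v : 'I_n -> R) I i :
  in_EP P Y -> I \in P -> i \in I -> \sum_(j in I) Y i j * v j = v i.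
Proof.
case=> _ HY IP iI; rewrite (bigD1 i) //= (HY I) // eqxx mul1r big1 ?addr0 //.
by move=> j /andP[jI ji]; rewrite (HY I) // eq_sym (negbTE ji) mul0r.
Qed.

Lemma sub0_eq0 (R : realType) n (u : 'rV[R]_n) I :
  subnorm u I = 0 -> forall i, i \in I -> u 0 i = 0.
Proof.
rewrite /subnorm => /eqP; rewrite sqrtr_eq0 => H i iI.
have H0 : \sum_(i in I) u 0 i ^+ 2 = 0.
  by apply/eqP; rewrite eq_le H sumr_ge0 // => k _; rewrite sqr_ge0.
apply/eqP; rewrite -sqrf_eq0; apply/eqP.
by apply: (psumr_eq0P _ H0) => // k _; rewrite sqr_ge0.
Qed.

Lemma subnorm_sq (R : realType) n (u : 'rV[R]_n) I :
  subnorm u I ^+ 2 = \sum_(i in I) u 0 i ^+ 2.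
Proof. by rewrite sqr_sqrtr // sumr_ge0 // => k _; rewrite sqr_ge0. Qed.

Definition QQ (R : realType) n (Y : 'M[R]_n) (u : 'rV[R]_n) (I J : {set 'I_n}) :=
  \sum_(i in I) \sum_(j in J) u 0 i * Y i j * u 0 j.

Lemma QQ_diag (R : realType) n (P : {set {set 'I_n}}) (Y : 'M[R]_n) u I :
  in_EP P Y -> I \in P -> QQ Y u I I = subnorm u I ^+ 2.
Proof.
move=> HE IP; rewrite subnorm_sq; apply: eq_bigr => i iI.
under eq_bigr do rewrite -mulrA.
by rewrite -mulr_sumr (diag_block _ HE IP iI) expr2.
Qed.

Lemma QQ_row (R : realType) n (P : {set {set 'I_n}}) (Y : 'M[R]_n) u I :
  partition P [set: 'I_n] -> Y *m u^T = 0 -> \sum_(K in P) QQ Y u I K = 0.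
Proof.
move=> HP HY; rewrite /QQ exchange_big /=; apply: big1 => i _.
have := congr1 (fun M : 'M[R]_(n,1) => M i 0) HY; rewrite !mxE => H.
rewrite -(sum_blocks (fun j => u 0 i * Y i j * u 0 j) HP).
under eq_bigr do rewrite -mulrA.
have H' : \sum_j Y i j * u 0 j = 0 by move: H; under eq_bigr do rewrite mxE.
by rewrite -mulr_sumr H' mulr0.
Qed.

Lemma QQ_sym (R : realType) n (Y : 'M[R]_n) u I J :
  Y^T = Y -> QQ Y u J I = QQ Y u I J.
Proof.
move=> HT; rewrite /QQ exchange_big /=; apply: eq_bigr => i _; apply: eq_bigr => j _.
have := congr1 (fun M : 'M[R]_n => M i j) HT; rewrite mxE => ->; ring.
Qed.

Lemma ind_sum (R : realType) n (I J : {set 'I_n}) (g : 'I_n -> 'I_n -> R) :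
  \sum_i \sum_j ((i \in I)%:R * (j \in J)%:R * g i j) =
  \sum_(i in I) \sum_(j in J) g i j.
Proof.
rewrite [RHS]big_mkcond; apply: eq_bigr => i _.
case: (i \in I); last by rewrite big1 // => j _; rewrite !mul0r.
rewrite [RHS]big_mkcond; apply: eq_bigr => j _.
by case: (j \in J); rewrite /= ?mul1r ?mul0r.
Qed.

Lemma cross (R : realType) n (P : {set {set 'I_n}}) (Y : 'M[R]_n) u I J :
  in_EP P Y -> I \in P -> J \in P ->
  - QQ Y u I J <= subnorm u I * subnorm u J.
Proof.
move=> HE IP JP.
set a := subnorm u I; set b := subnorm u J.
have a0 : 0 <= a by apply: sqrtr_ge0.
have b0 : 0 <= b by apply: sqrtr_ge0.
have [a0e|an0] := eqVneq a 0.
  rewrite /QQ big1 ?oppr0 ?a0e ?mul0r // => i iI.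
  by rewrite big1 // => j _; rewrite (sub0_eq0 a0e iI) ?mul0r.
have [b0e|bn0] := eqVneq b 0.
  rewrite /QQ big1 ?oppr0 ?b0e ?mulr0 // => i iI.
  by rewrite big1 // => j jJ; rewrite (sub0_eq0 b0e jJ) ?mulr0.
have ap : 0 < a by rewrite lt_def an0.
have bp : 0 < b by rewrite lt_def bn0.
pose f i := (b * (i \in I)%:R + a * (i \in J)%:R) * u 0 i.
have := psd_form f (proj1 HE).
pose g i j := u 0 i * Y i j * u 0 j.
have -> : \sum_i \sum_j f i * Y i j * f j =
   b * b * (\sum_i \sum_j ((i \in I)%:R * (j \in I)%:R * g i j)) +
   b * a * (\sum_i \sum_j ((i \in I)%:R * (j \in J)%:R * g i j)) +
   a * b * (\sum_i \sum_j ((i \in J)%:R * (j \in I)%:R * g i j)) +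
   a * a * (\sum_i \sum_j ((i \in J)%:R * (j \in J)%:R * g i j)).
  rewrite !mulr_sumr -!big_split /=; apply: eq_bigr => i _.
  rewrite !mulr_sumr -!big_split /=; apply: eq_bigr => j _.
  rewrite /f /g; ring.
rewrite !ind_sum -/(QQ Y u I I) -/(QQ Y u I J) -/(QQ Y u J I) -/(QQ Y u J J).
rewrite (QQ_diag _ HE IP) (QQ_diag _ HE JP) (QQ_sym _ _ _ (proj1 (proj1 HE))).
rewrite -/a -/b => H.
have hab : 0 < a * b by rewrite mulr_gt0.
nra.
Qed.

Lemma part1 (R : realType) n (P : {set {set 'I_n}}) (Y : 'M[R]_n) (u : 'rV[R]_n) :
  partition P [set: 'I_n] -> in_EP P Y -> Y *m u^T = 0 -> balanced P u.
Proof.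
move=> HP HE HY I IP.
set a := subnorm u I.
have a0 : 0 <= a by apply: sqrtr_ge0.
have [a0e|an0] := eqVneq a 0.
  by rewrite a0e sumr_ge0 // => J _; apply: sqrtr_ge0.
have ap : 0 < a by rewrite lt_def an0.
have H := QQ_row I HP HY.
rewrite (bigD1 I) //= (QQ_diag _ HE IP) -/a in H.
have H2 : a ^+ 2 <= \sum_(J in P | J != I) subnorm u I * subnorm u J.
  have -> : a ^+ 2 = - \sum_(J in P | J != I) QQ Y u I J.
    by apply/eqP; rewrite -subr_eq0 opprK H.
  rewrite -sumrN; apply: ler_sum => J /andP[JP _]; exact: (cross u HE IP JP).
rewrite -mulr_sumr expr2 in H2.
by rewrite -(ler_pM2l ap).
Qed.
Lemma triangle (R : realType) (A B C : R) :
  0 <= A -> 0 < B -> 0 <= C -> 2 * A <= A + B + C -> 2 * B <= A + B + C ->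
  2 * C <= A + B + C ->
  exists v1 v2 v3 : R * R,
    [/\ v1.1 ^+ 2 + v1.2 ^+ 2 = 1, v2.1 ^+ 2 + v2.2 ^+ 2 = 1,
        v3.1 ^+ 2 + v3.2 ^+ 2 = 1,
        A * v1.1 + B * v2.1 + C * v3.1 = 0 & A * v1.2 + B * v2.2 + C * v3.2 = 0].
Proof.
move=> A0 B0 C0 hA hB hC.
have [Ae|An] := eqVneq A 0.
  exists (1, 0), (1, 0), (-1, 0); split => /=; try ring.
  have BC : B = C by lra.
  rewrite Ae BC; ring.
have [Ce|Cn] := eqVneq C 0.
  exists (-1, 0), (1, 0), (1, 0); split => /=; try ring.
  have BC : B = A by lra.
  rewrite Ce BC; ring.
have Ap : 0 < A by rewrite lt_def An.
have Cp : 0 < C by rewrite lt_def Cn.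
have Bn : B != 0 by rewrite gt_eqF.
set al := (C ^+ 2 - A ^+ 2 - B ^+ 2) / (2 * A * B).
set ga := (A ^+ 2 - B ^+ 2 - C ^+ 2) / (2 * B * C).
have pAB : 0 < 2 * A * B by rewrite !mulr_gt0.
have al1 : al <= 1.
  rewrite /al ler_pdivrMr // mul1r; nra.
have al2 : -1 <= al.
  rewrite /al ler_pdivlMr //; nra.
have al3 : 0 <= 1 - al ^+ 2 by nra.
set be := Num.sqrt (1 - al ^+ 2).
have hbe : be ^+ 2 = 1 - al ^+ 2 by rewrite sqr_sqrtr.
exists (al, be), (1, 0), (ga, - (A * be) / C); split => /=.
- by rewrite hbe; ring.
- ring.
- have -> : (- (A * be) / C) ^+ 2 = A ^+ 2 * be ^+ 2 / C ^+ 2 by field.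
  rewrite hbe /al /ga; field; rewrite ?Bn ?An ?Cn //.
- rewrite /al /ga; field; rewrite ?Bn ?An ?Cn //.
- field. all: try done.
Qed.

Lemma split3 (R : realType) (T : finType) (P S : {set T}) K0 (F : T -> R) :
  S \subset P -> K0 \in P -> K0 \notin S ->
  \sum_(K in P) F K = \sum_(K in S) F K + F K0 +
     \sum_(K in P | (K \notin S) && (K != K0)) F K.
Proof.
move=> SP K0P K0S.
rewrite (bigID (fun K => K \in S)) /= -addrA; congr (_ + _).
  by apply: eq_bigl => K; apply/andb_idl => /(subsetP SP).
rewrite (bigD1 K0) /=; last by rewrite K0P.
by congr (_ + _); apply: eq_bigl => K; rewrite andbA.
Qed.

Lemma polygon (R : realType) (T : finType) (P : {set T}) (r : T -> R) :
  (forall K, 0 <= r K) ->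
  (forall K, K \in P -> r K <= \sum_(J in P | J != K) r J) ->
  exists w : T -> R * R, (forall K, (w K).1 ^+ 2 + (w K).2 ^+ 2 = 1) /\
    \sum_(K in P) r K * (w K).1 = 0 /\ \sum_(K in P) r K * (w K).2 = 0.
Proof.
move=> r0 hbal.
set T0 := \sum_(K in P) r K.
have T00 : 0 <= T0 by rewrite sumr_ge0.
have [Te|Tn] := eqVneq T0 0.
  exists (fun _ => (1, 0)); split => [K|/=]; first by rewrite /=; ring.
  split; last by rewrite big1 // => K _; rewrite mulr0.
  by under eq_bigr do rewrite mulr1; exact: Te.
have Tp : 0 < T0 by rewrite lt_def Tn.
pose Pr (S : {set T}) := (S \subset P) && (2 * \sum_(K in S) r K <= T0).
have P0 : Pr set0 by rewrite /Pr sub0set big_set0 mulr0.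
case: (@arg_maxnP _ set0 Pr (fun S => #|S|) P0) => S /andP[SP hS] Smax.
have : ~~ (P \subset S).
  apply/negP => PS; have SeP : S = P by apply/eqP; rewrite eqEsubset SP.
  by move: hS; rewrite SeP -/T0; lra.
case/subsetPn => K0 K0P K0S.
have hS' : T0 < 2 * (r K0 + \sum_(K in S) r K).
  rewrite -big_setU1 //=; rewrite ltNge; apply/negP => H.
  have : Pr (K0 |: S) by rewrite /Pr H subUset sub1set K0P SP.
  move/Smax; rewrite cardsU1 K0S /=; lia.
set A := \sum_(K in S) r K.
set B := r K0.
have hB : 2 * B <= T0.
  have H1 : B <= \sum_(J in P | J != K0) r J := hbal _ K0P.
  have H2 : T0 = B + \sum_(J in P | J != K0) r J by rewrite /T0 (bigD1 K0).
  lra.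
have hsplit := split3 r SP K0P K0S; rewrite -/T0 -/A -/B in hsplit.
set C := \sum_(K in P | (K \notin S) && (K != K0)) r K.
have [v1 [v2 [v3 [h1 h2 h3 e1 e2]]]] :
  exists v1 v2 v3 : R * R,
    [/\ v1.1 ^+ 2 + v1.2 ^+ 2 = 1, v2.1 ^+ 2 + v2.2 ^+ 2 = 1,
        v3.1 ^+ 2 + v3.2 ^+ 2 = 1,
        A * v1.1 + B * v2.1 + C * v3.1 = 0 & A * v1.2 + B * v2.2 + C * v3.2 = 0].
  have hS2 : T0 < 2 * (B + A) := hS'.
  have hS3 : 2 * A <= T0 := hS.
  have hs2 : T0 = A + B + C := hsplit.
  have hC : 0 <= C by rewrite sumr_ge0.
  have hA : 0 <= A by rewrite sumr_ge0.
  clearbody A B C.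
  apply: triangle; lra.
pose w K := if K \in S then v1 else if K == K0 then v2 else v3.
exists w; split.
  by move=> K; rewrite /w; case: ifP => _ //; case: ifP.
have key : forall h : R * R -> R,
    \sum_(K in P) r K * h (w K) = A * h v1 + B * h v2 + C * h v3.
  move=> h; rewrite (split3 (fun K => r K * h (w K)) SP K0P K0S).
  rewrite /w (negbTE K0S) eqxx; congr (_ + _ + _).
    by rewrite /A mulr_suml; apply: eq_bigr => K ->.
  rewrite /C mulr_suml; apply: eq_bigr => K /andP[_ /andP[KS KK0]].
  by rewrite (negbTE KS) (negbTE KK0).
by rewrite !key.
Qed.
Lemma blk_in n (P : {set {set 'I_n}}) i :
  partition P [set: 'I_n] -> i \in pblock P i.
Proof. by case/and3P => /eqP cov _ _; rewrite mem_pblock cov inE. Qed.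

Lemma blk_P n (P : {set {set 'I_n}}) i :
  partition P [set: 'I_n] -> pblock P i \in P.
Proof. by case/and3P => /eqP cov _ _; apply: pblock_mem; rewrite cov inE. Qed.

Lemma blk_eq n (P : {set {set 'I_n}}) K i :
  partition P [set: 'I_n] -> K \in P -> i \in K -> pblock P i = K.
Proof. by case/and3P => _ ti _; apply: def_pblock. Qed.

Lemma blk_eqb n (P : {set {set 'I_n}}) K j :
  partition P [set: 'I_n] -> K \in P -> (pblock P j == K) = (j \in K).
Proof.
move=> HP KP; apply/eqP/idP => [<-|jK]; first exact: blk_in.
exact: blk_eq.
Qed.

Definition ee (R : realType) n (P : {set {set 'I_n}}) (u : 'rV[R]_n) i :=
  u 0 i / subnorm u (pblock P i).

Lemma blocksum (R : realType) n (P : {set {set 'I_n}}) (u : 'rV[R]_n) K :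
  partition P [set: 'I_n] -> K \in P ->
  \sum_(j in K) ee P u j * u 0 j = subnorm u K.
Proof.
move=> HP KP.
have [r0|rn] := eqVneq (subnorm u K) 0.
  rewrite r0 big1 // => j jK; rewrite (sub0_eq0 r0 jK) mulr0 //.
transitivity (\sum_(j in K) u 0 j ^+ 2 / subnorm u K).
  apply: eq_bigr => j jK; rewrite /ee (blk_eq HP KP jK); field.
  exact: rn.
rewrite -mulr_suml -subnorm_sq; field; exact: rn.
Qed.

Lemma blockCS (R : realType) n (P : {set {set 'I_n}}) (u : 'rV[R]_n) K
  (x : 'I_n -> R) :
  partition P [set: 'I_n] -> K \in P ->
  (\sum_(j in K) ee P u j * x j) ^+ 2 <= \sum_(j in K) x j ^+ 2.
Proof.
move=> HP KP.
have [r0|rn] := eqVneq (subnorm u K) 0.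
  rewrite big1 ?expr0n ?sumr_ge0 // => [j _|j jK]; first by rewrite sqr_ge0.
  by rewrite /ee (blk_eq HP KP jK) r0 invr0 !mulr0 mul0r.
set t := \sum_(j in K) ee P u j * x j.
have e1 : \sum_(j in K) ee P u j ^+ 2 = 1.
  transitivity (\sum_(j in K) u 0 j ^+ 2 / subnorm u K ^+ 2).
    apply: eq_bigr => j jK; rewrite /ee (blk_eq HP KP jK); field; exact: rn.
  rewrite -mulr_suml -subnorm_sq; field; exact: rn.
have : 0 <= \sum_(j in K) (x j - t * ee P u j) ^+ 2 by rewrite sumr_ge0 // => j _; rewrite sqr_ge0.
have -> : \sum_(j in K) (x j - t * ee P u j) ^+ 2 =
   \sum_(j in K) x j ^+ 2 - 2 * t * t + t ^+ 2 * \sum_(j in K) ee P u j ^+ 2.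
  have E1 : 2 * t * t = \sum_(j in K) 2 * t * (ee P u j * x j) by rewrite -mulr_sumr.
  have E2 : t ^+ 2 * \sum_(j in K) ee P u j ^+ 2 = \sum_(j in K) t ^+ 2 * ee P u j ^+ 2 by rewrite mulr_sumr.
  rewrite E1 E2 -sumrB -big_split /=; apply: eq_bigr => j _; ring.
rewrite e1; lra.
Qed.

Definition Ymat (R : realType) n (P : {set {set 'I_n}}) (u : 'rV[R]_n)
  (w : {set 'I_n} -> R * R) : 'M[R]_n :=
  \matrix_(i, j) ((i == j)%:R +
    ((w (pblock P i)).1 * (w (pblock P j)).1 + (w (pblock P i)).2 * (w (pblock P j)).2
      - (pblock P i == pblock P j)%:R) * ee P u i * ee P u j).

Lemma form_eq (R : realType) n (Y : 'M[R]_n) (x : 'cV[R]_n) :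
  (x^T *m Y *m x) 0 0 = \sum_i \sum_j x i 0 * Y i j * x j 0.
Proof.
rewrite !mxE.
under eq_bigr do rewrite !mxE.
under eq_bigr do under eq_bigr do rewrite !mxE.
rewrite exchange_big /=.
by under eq_bigr do rewrite mulr_suml.
Qed.

Lemma delta_sum (R : realType) n (F : 'I_n -> R) i :
  \sum_j (i == j)%:R * F j = F i.
Proof.
rewrite (bigD1 i) //= eqxx mul1r big1 ?addr0 // => j ji.
by rewrite eq_sym (negbTE ji) mul0r.
Qed.

Lemma sqr_sum (R : realType) n (g : 'I_n -> R) :
  \sum_i \sum_j g i * g j = (\sum_i g i) ^+ 2.
Proof.
rewrite expr2 mulr_suml; apply: eq_bigr => i _; by rewrite mulr_sumr.
Qed.

Lemma Ymat_EP (R : realType) n (P : {set {set 'I_n}}) (u : 'rV[R]_n) w :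
  partition P [set: 'I_n] -> (forall K, (w K).1 ^+ 2 + (w K).2 ^+ 2 = 1) ->
  in_EP P (Ymat P u w).
Proof.
move=> HP hw; split; last first.
  move=> I IP i j iI jI; rewrite mxE (blk_eq HP IP iI) (blk_eq HP IP jI) eqxx.
  have := hw I; move=> h.
  have -> : (w I).1 * (w I).1 + (w I).2 * (w I).2 - 1%:R = 0 by rewrite -h; ring.
  by rewrite mul0r mul0r addr0.
split.
  apply/matrixP => i j; rewrite !mxE eq_sym [pblock P j == _]eq_sym; ring.
move=> x; rewrite form_eq.
pose f i := x i 0.
pose e := ee P u.
pose b i := pblock P i.
pose g1 i := (w (b i)).1 * e i * f i.
pose g2 i := (w (b i)).2 * e i * f i.
pose h i := e i * f i.
have -> : \sum_i \sum_j x i 0 * Ymat P u w i j * x j 0 =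
  \sum_i \sum_j ((i == j)%:R * (f i * f j)) + \sum_i \sum_j (g1 i * g1 j)
   + \sum_i \sum_j (g2 i * g2 j) - \sum_i \sum_j ((b i == b j)%:R * (h i * h j)).
  rewrite -!big_split -sumrB /=; apply: eq_bigr => i _.
  rewrite -!big_split -sumrB /=; apply: eq_bigr => j _.
  rewrite mxE /g1 /g2 /h /e /b /f; ring.
have -> : \sum_i \sum_j ((i == j)%:R * (f i * f j)) = \sum_i f i ^+ 2.
  by apply: eq_bigr => i _; rewrite (delta_sum (fun j => f i * f j)) expr2.
rewrite !sqr_sum.
have -> : \sum_i \sum_j ((b i == b j)%:R * (h i * h j)) =
    \sum_(K in P) (\sum_(j in K) e j * f j) ^+ 2.
  rewrite (sum_blocks _ HP); apply: eq_bigr => K KP.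
  rewrite expr2 mulr_suml; apply: eq_bigr => i iI.
  rewrite mulr_sumr [RHS]big_mkcond /=; apply: eq_bigr => j _.
  rewrite /b /= (blk_eq HP KP iI) eq_sym (blk_eqb _ HP KP) /h.
  by case: (j \in K); rewrite /= ?mul1r ?mul0r.
have HB : \sum_(K in P) (\sum_(j in K) e j * f j) ^+ 2 <= \sum_i f i ^+ 2.
  rewrite (sum_blocks _ HP); apply: ler_sum => K KP; exact: blockCS.
have := sqr_ge0 (\sum_i g1 i); have := sqr_ge0 (\sum_i g2 i).
lra.
Qed.

Lemma Ymat_null (R : realType) n (P : {set {set 'I_n}}) (u : 'rV[R]_n) w :
  partition P [set: 'I_n] ->
  \sum_(K in P) subnorm u K * (w K).1 = 0 ->
  \sum_(K in P) subnorm u K * (w K).2 = 0 ->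
  Ymat P u w *m u^T = 0.
Proof.
move=> HP s1 s2; apply/matrixP => i k; rewrite ord1 !mxE.
pose e := ee P u.
pose b i := pblock P i.
have hs : forall c : R * R -> R, \sum_(K in P) subnorm u K * c (w K) = 0 ->
    \sum_j c (w (b j)) * (e j * u 0 j) = 0.
  move=> c hc; rewrite (sum_blocks _ HP) -[RHS]hc; apply: eq_bigr => K KP.
  rewrite -(blocksum u HP KP) mulr_suml; apply: eq_bigr => j jK.
  by rewrite /b (blk_eq HP KP jK) mulrC.
have hb : \sum_j (b i == b j)%:R * (e j * u 0 j) = subnorm u (b i).
  rewrite -(blocksum u HP (blk_P i HP)) [RHS]big_mkcond /=; apply: eq_bigr => j _.
  rewrite eq_sym (blk_eqb _ HP (blk_P i HP)).
  by case: (j \in b i); rewrite /= ?mul1r ?mul0r.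
have -> : \sum_j Ymat P u w i j * u^T j 0 =
   \sum_j ((i == j)%:R * u 0 j)
   + e i * (w (b i)).1 * \sum_j ((w (b j)).1 * (e j * u 0 j))
   + e i * (w (b i)).2 * \sum_j ((w (b j)).2 * (e j * u 0 j))
   - e i * \sum_j ((b i == b j)%:R * (e j * u 0 j)).
  rewrite !mulr_sumr -!big_split -sumrB /=; apply: eq_bigr => j _.
  rewrite !mxE /e /b; ring.
rewrite delta_sum (hs (fun v => v.1)) // (hs (fun v => v.2)) // hb.
rewrite !mulr0 !addr0 /e /ee -/(b i).
have [r0|rn] := eqVneq (subnorm u (b i)) 0.
  by rewrite (sub0_eq0 r0 (blk_in i HP)) r0 !mul0r subr0.
by rewrite mulfVK // subrr.
Qed.

Theorem corollary5p10 (R : realType) (n : nat) (P : {set {set 'I_n}}) :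
  partition P [set: 'I_n] ->
  (forall (m : nat) (U : 'M[R]_(m, n)),
      realizable P U -> forall u : 'rV[R]_n, (u <= U)%MS -> balanced P u) /\
  (forall u : 'rV[R]_n, u != 0 -> (realizable P u <-> balanced P u)).
Proof.
move=> HP; split.
  move=> m U [Y [HE HY]] u uU; exact: (part1 HP HE (HY u uU)).
move=> u _; split.
  move=> [Y [HE HY]]; exact: (part1 HP HE (HY u (submx_refl u))).
move=> hbal.
have [w [hw [s1 s2]]] := @polygon R _ P (fun K => subnorm u K)
   (fun K => sqrtr_ge0 _) hbal.
exists (Ymat P u w); split; first exact: Ymat_EP.
move=> v /sub_rVP [a ->].
by rewrite linearZ /= -scalemxAr (Ymat_null HP s1 s2) scaler0.
Qed.
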